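(* Let $L\in\mathbb{R}^{n\times m}$ be arbitrary, let $F_d\in\mathbb{R}^{p\times n}$ be a deadbeat gain (all eigenvalues of $A_{F_d}=A+BF_d$ equal zero), let $s\ge1$, $k$ be integers, and let $(u,y,r,\hat x)$ be a solution of the kernel-based model with gain $L$ on the time interval $[k-n+1,k+s]$. Then for every $F\in\mathbb{R}^{p\times n}$ there exists $v\in\mathbb{R}^{(s+n)p}$ such that $$\begin{bmatrix}u_s(k)\\ y_s(k)\end{bmatrix}=I_{G,s}(F)\,v+I_{C,s}(F_d,L)\,r_{s+n}(k-n).$$
   Context: Consider the discrete-time LTI system $x(k+1)=Ax(k)+Bu(k)$, $y(k)=Cx(k)+Du(k)$ with $u\in\mathbb{R}^p$, $x\in\mathbb{R}^n$, $y\in\mathbb{R}^m$, $n\ge 1$, and $(A,B,C,D)$ a minimal (controllable and observable) realization. For a sequence $\phi$ and integers $k$, $s\ge1$, the stacked vector is $\phi_s(k)=[\phi(k+1)^T,\dots,\phi(k+s)^T]^T$. For $F\in\mathbb{R}^{p\times n}$ put $A_F=A+BF$ and $C_F=C+DF$. Kernel-based model with observer gain $L\in\mathbb{R}^{n\times m}$: sequences $u,y,r\ (\in\mathbb{R}^m),\hat x$ satisfying $\hat x(k+1)=A\hat x(k)+Bu(k)+Lr(k)$, $y(k)=C\hat x(k)+Du(k)+r(k)$ ($r$ is the residual). Finite-sample image representation: $M_s(F)\in\mathbb{R}^{sp\times(s+n)p}$, $N_s(F)\in\mathbb{R}^{sm\times(s+n)p}$ with $(l,j)$ blocks ($l=1,\dots,s$;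 $j=1,\dots,s+n$) $M_{n+l-j}$, $N_{n+l-j}$, where $M_k=FA_F^{k-1}B$ ($k\ge1$), $M_0=I_p$, $M_k=0$ ($k<0$), $N_k=C_FA_F^{k-1}B$ ($k\ge1$), $N_0=D$, $N_k=0$ ($k<0$); $I_{G,s}(F)=\begin{bmatrix}M_s(F)\\ N_s(F)\end{bmatrix}$. For gains $F,L$: $\hat Y_s(F,L)\in\mathbb{R}^{sp\times(s+n)m}$, $\hat X_s(F,L)\in\mathbb{R}^{sm\times(s+n)m}$ with $(l,j)$ blocks $\hat Y_{n+l-j}$, $\hat X_{n+l-j}$, where $\hat Y_k=FA_F^{k-1}L$ ($k\ge1$), $\hat Y_k=0$ ($k\le0$), $\hat X_k=C_FA_F^{k-1}L$ ($k\ge1$), $\hat X_0=I_m$, $\hat X_k=0$ ($k<0$); $I_{C,s}(F,L)=\begin{bmatrix}\hat Y_s(F,L)\\ \hat X_s(F,L)\end{bmatrix}$. *)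

(* Defs.v *)
From HB Require Import structures.
From mathcomp Require Import all_boot all_order all_algebra.
Set Implicit Arguments. Unset Strict Implicit. Unset Printing Implicit Defensive.
Import Order.TTheory GRing.Theory Num.Theory.
Local Open Scope ring_scope.

Section Defs.
Variable R : realFieldType.

Definition ctrb_mx (n p : nat) (A : 'M[R]_n) (B : 'M[R]_(n, p)) :=
  \mxrow_(i < n) (A ^+ i *m B).
Definition obsv_mx (n m : nat) (A : 'M[R]_n) (C : 'M[R]_(m, n)) :=
  \mxcol_(i < n) (C *m A ^+ i).
Definition controllable (n p : nat) (A : 'M[R]_n) (B : 'M[R]_(n, p)) : Prop :=
  \rank (ctrb_mx A B) = n.
Definition observable (n m : nat) (A : 'M[R]_n) (C : 'M[R]_(m, n)) : Prop :=
  \rank (obsv_mx A C) = n.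

Definition deadbeat (n p : nat) (A : 'M[R]_n) (B : 'M[R]_(n, p))
  (Fd : 'M[R]_(p, n)) : Prop :=
  char_poly (A + B *m Fd) = 'X^n.

Variables (n p m : nat) (A : 'M[R]_n) (B : 'M[R]_(n, p))
          (C : 'M[R]_(m, n)) (D : 'M[R]_(m, p)).

Definition AF (F : 'M[R]_(p, n)) : 'M[R]_n := A + B *m F.
Definition CF (F : 'M[R]_(p, n)) : 'M[R]_(m, n) := C + D *m F.

Definition Mpar (F : 'M[R]_(p, n)) (k : int) : 'M[R]_(p, p) :=
  match k with
  | Posz 0 => 1%:M
  | Posz k'.+1 => F *m (AF F) ^+ k' *m B
  | Negz _ => 0
  end.
Definition Npar (F : 'M[R]_(p, n)) (k : int) : 'M[R]_(m, p) :=
  match k with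
  | Posz 0 => D
  | Posz k'.+1 => CF F *m (AF F) ^+ k' *m B
  | Negz _ => 0
  end.
Definition Yhatpar (F : 'M[R]_(p, n)) (L : 'M[R]_(n, m)) (k : int) : 'M[R]_(p, m) :=
  match k with
  | Posz k'.+1 => F *m (AF F) ^+ k' *m L
  | _ => 0
  end.
Definition Xhatpar (F : 'M[R]_(p, n)) (L : 'M[R]_(n, m)) (k : int) : 'M[R]_(m, m) :=
  match k with
  | Posz 0 => 1%:M
  | Posz k'.+1 => CF F *m (AF F) ^+ k' *m L
  | Negz _ => 0
  end.

(* Block (l,j) (0-based here; the index n+l-j is unchanged by the shift). *)
Definition Ms (s : nat) (F : 'M[R]_(p, n)) :
  'M[R]_(\sum_(l < s) p, \sum_(j < s + n) p) :=
  \mxblock_(l < s, j < s + n) Mpar F (n%:Z + l%:Z - j%:Z).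
Definition Ns (s : nat) (F : 'M[R]_(p, n)) :
  'M[R]_(\sum_(l < s) m, \sum_(j < s + n) p) :=
  \mxblock_(l < s, j < s + n) Npar F (n%:Z + l%:Z - j%:Z).
Definition IG (s : nat) (F : 'M[R]_(p, n)) := col_mx (Ms s F) (Ns s F).

Definition Yhats (s : nat) (F : 'M[R]_(p, n)) (L : 'M[R]_(n, m)) :
  'M[R]_(\sum_(l < s) p, \sum_(j < s + n) m) :=
  \mxblock_(l < s, j < s + n) Yhatpar F L (n%:Z + l%:Z - j%:Z).
Definition Xhats (s : nat) (F : 'M[R]_(p, n)) (L : 'M[R]_(n, m)) :
  'M[R]_(\sum_(l < s) m, \sum_(j < s + n) m) :=
  \mxblock_(l < s, j < s + n) Xhatpar F L (n%:Z + l%:Z - j%:Z).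
Definition IC (s : nat) (F : 'M[R]_(p, n)) (L : 'M[R]_(n, m)) :=
  col_mx (Yhats s F L) (Xhats s F L).

Definition kernel_model_on (L : 'M[R]_(n, m))
  (u : int -> 'cV[R]_p) (y r : int -> 'cV[R]_m) (xh : int -> 'cV[R]_n)
  (t0 t1 : int) : Prop :=
  (forall t : int, t0 <= t < t1 ->
     xh (t + 1) = A *m xh t + B *m u t + L *m r t) /\
  (forall t : int, t0 <= t <= t1 ->
     y t = C *m xh t + D *m u t + r t).

End Defs.

Definition stack (R : Type) (d : nat) (phi : int -> 'cV[R]_d) (s : nat) (k : int)
  : 'M[R]_(\sum_(l < s) d, 1) :=
  \mxcol_(l < s) phi (k + (l.+1)%:Z)%R.

(* Main.v *)
Require Import Defs.
From HB Require Import structures.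
From mathcomp Require Import all_boot all_order all_algebra.
From mathcomp Require Import zify ring.
Set Implicit Arguments. Unset Strict Implicit. Unset Printing Implicit Defensive.
Import Order.TTheory GRing.Theory Num.Theory.
Local Open Scope ring_scope.

Section Aux.
Variable R : realFieldType.

Definition Ppar (n q a : nat) (Aq : 'M[R]_n) (K : 'M[R]_(n,q)) (H : 'M[R]_(a,n))
  (E : 'M[R]_(a,q)) (i : int) : 'M[R]_(a,q) :=
  match i with Posz 0 => E | Posz k.+1 => H *m Aq ^+ k *m K | Negz _ => 0 end.

Fixpoint st (n q : nat) (Aq : 'M[R]_n) (K : 'M[R]_(n,q)) (w : nat -> 'cV[R]_q) (t : nat)
  : 'cV[R]_n :=
  match t with 0 => 0 | t.+1 => Aq *m @st n q Aq K w t + K *m w t end.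

Lemma st_closed n q (Aq : 'M[R]_n) (K : 'M[R]_(n,q)) w t :
  st Aq K w t = \sum_(j < t) Aq ^+ (t.-1 - j) *m K *m w j.
Proof.
elim: t => [|t IH] /=; first by rewrite big_ord0.
rewrite big_ord_recr /= subnn expr0 mul1mx IH mulmx_sumr; congr (_ + _).
have e : forall k, Aq *m Aq ^+ k = Aq ^+ k.+1 by move=> k; rewrite exprS mulmxE.
apply: eq_bigr => j _ /=; rewrite !mulmxA e.
have -> : (t.-1 - j).+1 = (t - j)%N by have := ltn_ord j; lia.
by [].
Qed.

Lemma Ppar_sum n q a (Aq : 'M[R]_n) (K : 'M[R]_(n,q)) (H : 'M[R]_(a,n))
  (E : 'M[R]_(a,q)) N (w : nat -> 'cV[R]_q) t : (t < N)%N ->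
  \sum_(j < N) Ppar Aq K H E (t%:Z - j%:Z) *m w j = H *m st Aq K w t + E *m w t.
Proof.
move=> htN.
rewrite st_closed mulmx_sumr.
rewrite -(big_mkord xpredT (fun j => Ppar Aq K H E (t%:Z - j%:Z) *m w j)).
rewrite (big_cat_nat _ (n:=t.+1)) //=.
rewrite [X in _ + X]big1_seq ?addr0; last first.
  move=> j /andP[_]; rewrite mem_index_iota => /andP[hj _].
  have -> : t%:Z - j%:Z = Negz (j - t.+1) by rewrite NegzE; lia.
  by rewrite mul0mx.
rewrite big_nat_recr //= subrr /=; congr (_ + _).
rewrite big_mkord; apply: eq_bigr => j _.
have -> : t%:Z - j%:Z = ((t.-1 - j).+1)%:Z by have := ltn_ord j; lia.
by rewrite /= !mulmxA.
Qed.

Lemma reach n p (A : 'M[R]_n) (B : 'M[R]_(n,p)) (x : 'cV[R]_n) :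
  controllable A B -> exists u0 : nat -> 'cV[R]_p, st A B u0 n = x.
Proof.
move=> hc.
have hf : row_full (ctrb_mx A B)^T by rewrite /row_full mxrank_tr hc.
have := submx_full (x^T) hf; case/submxP => D hD.
pose wn (i : nat) : 'cV[R]_p := oapp (fun o : 'I_n => submxcol D^T o) 0 (insub i).
exists (fun j => wn (n.-1 - j)%N).
rewrite st_closed.
have -> : x = ctrb_mx A B *m D^T by rewrite -[x]trmxK hD trmx_mul trmxK.
rewrite /ctrb_mx -[D^T](@submxcolK _ _ (fun _ => p)) mul_mxrow_mxcol.
rewrite (reindex_inj rev_ord_inj) /=; apply: eq_bigr => j _.
rewrite /wn.
have -> : (n.-1 - (n - j.+1))%N = j by have := ltn_ord j; lia.
by rewrite valK.
Qed.
End Aux.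

Lemma Ppar_sum2 (R : realFieldType) n q a (Aq : 'M[R]_n) (K : 'M[R]_(n,q)) (H : 'M[R]_(a,n))
  (E : 'M[R]_(a,q)) N (w : nat -> 'cV[R]_q) (b c : nat) : (b + c < N)%N ->
  \sum_(j < N) Ppar Aq K H E (b%:Z + c%:Z - j%:Z) *m w j
    = H *m st Aq K w (b + c)%N + E *m w (b + c)%N.
Proof.
move=> h; rewrite -(Ppar_sum Aq K H E w h); apply: eq_bigr => j _.
by rewrite PoszD.
Qed.

Theorem lemma4 (R : realFieldType) (n p m : nat)
  (A : 'M[R]_n) (B : 'M[R]_(n, p)) (C : 'M[R]_(m, n)) (D : 'M[R]_(m, p)) :
  (0 < n)%N -> controllable A B -> observable A C ->
  forall (L : 'M[R]_(n, m)) (Fd : 'M[R]_(p, n)), deadbeat A B Fd ->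
  forall (s : nat) (k : int), (1 <= s)%N ->
  forall (u : int -> 'cV[R]_p) (y r : int -> 'cV[R]_m) (xh : int -> 'cV[R]_n),
  kernel_model_on A B C D L u y r xh (k - n%:Z + 1) (k + s%:Z) ->
  forall F : 'M[R]_(p, n),
  exists v : 'cV[R]_(\sum_(j < s + n) p),
    col_mx (stack u s k) (stack y s k) =
    IG A B C D s F *m v + IC A B C D s Fd L *m stack r (s + n) (k - n%:Z).
Proof.
move=> _ hc _ L Fd _ s k hs u y r xh [hx hy] F.
set t0 := k - n%:Z + 1.
pose U j := u (t0 + j%:Z).
pose Y j := y (t0 + j%:Z).
pose Rr j := r (t0 + j%:Z).
pose X j := xh (t0 + j%:Z).
have hX : forall j, (j < s + n - 1)%N -> X j.+1 = A *m X j + B *m U j + L *m Rr j.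
  move=> j hj; have := hx (t0 + j%:Z).
  have -> : t0 + j%:Z + 1 = t0 + j.+1%:Z by rewrite /t0; lia.
  apply; apply/andP; split; rewrite /t0; lia.
have hY : forall j, (j <= s + n - 1)%N -> Y j = C *m X j + D *m U j + Rr j.
  move=> j hj; apply: hy; apply/andP; split; rewrite /t0; lia.
pose Z := st (AF A B Fd) L Rr.
pose X' j := X j - Z j.
have [u0 hu0] := reach (X' n) hc.
pose eta := st A B u0.
pose vf j := if (j < n)%N then u0 j - F *m eta j else (U j - Fd *m Z j) - F *m X' j.
pose xi := st (AF A B F) B vf.
have h1 : forall j, (j <= n)%N -> xi j = eta j.
  elim => [|j IH] hj; first reflexivity.
  have -> : xi j.+1 = AF A B F *m xi j + B *m vf j by [].
  have -> : eta j.+1 = A *m eta j + B *m u0 j by [].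
  rewrite IH; last by apply: ltnW.
  rewrite /vf hj /AF mulmxDl mulmxBr -mulmxA addrACA subrr addr0.
  reflexivity.
have h2 : forall d, (n + d <= s + n - 1)%N -> xi (n + d)%N = X' (n + d)%N.
  elim => [|d IH] hd; first by rewrite ?addn0 (h1 n (leqnn n)) /eta hu0.
  rewrite addnS.
  have -> : xi (n + d).+1 = AF A B F *m xi (n + d)%N + B *m vf (n + d)%N by [].
  rewrite IH; last by lia.
  rewrite /vf ifN; last by rewrite -leqNgt leq_addr.
  rewrite /X' (hX (n + d)%N ltac:(lia)) /Z /= /AF.
  rewrite !mulmxDl !mulmxBr ?mulmxDl -!mulmxA.
  apply/matrixP=> i j; rewrite !mxE; ring.
exists (\mxcol_(j < s + n) vf j).
have hr : stack r (s + n) (k - n%:Z) = \mxcol_(j < s + n) Rr j.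
  rewrite /stack; apply: eq_mxcol => j; rewrite /Rr /t0; congr r; lia.
rewrite hr /IG /IC !mul_col_mx add_col_mx /Ms /Ns /Yhats /Xhats !mul_mxblock_mxrow.
rewrite -!mxcolD /stack.
congr (col_mx _ _); apply: eq_mxcol => l.
- have -> : u (k + l.+1%:Z) = U (n + l)%N by rewrite /U /t0; congr u; lia.
  have E1 : forall i, Mpar A B F i = Ppar (AF A B F) B F 1%:M i by case=> [[|i]|i].
  have E2 : forall i, Yhatpar A B Fd L i = Ppar (AF A B Fd) L Fd 0 i by case=> [[|i]|i].
  under eq_bigr do rewrite E1.
  under [X in _ = _ + X]eq_bigr do rewrite E2.
  have hl : (n + l < s + n)%N by have := ltn_ord l; lia.
  rewrite !Ppar_sum2 // -/xi -/Z h2; last by have := ltn_ord l; lia.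
  rewrite /vf ifN; last by rewrite -leqNgt leq_addr.
  rewrite /X' mul1mx mul0mx.
  apply/matrixP=> i j; rewrite !mxE; ring.
- have -> : y (k + l.+1%:Z) = Y (n + l)%N by rewrite /Y /t0; congr y; lia.
  have E1 : forall i, Npar A B C D F i = Ppar (AF A B F) B (CF C D F) D i by case=> [[|i]|i].
  have E2 : forall i, Xhatpar A B C D Fd L i = Ppar (AF A B Fd) L (CF C D Fd) 1%:M i
    by case=> [[|i]|i].
  under eq_bigr do rewrite E1.
  under [X in _ = _ + X]eq_bigr do rewrite E2.
  have hl : (n + l < s + n)%N by have := ltn_ord l; lia.
  rewrite !Ppar_sum2 // -/xi -/Z h2; last by have := ltn_ord l; lia.
  rewrite /vf ifN; last by rewrite -leqNgt leq_addr.
  rewrite hY; last by have := ltn_ord l; lia.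
  rewrite /X' mul1mx /CF !mulmxDl !mulmxBr ?mulmxDl -!mulmxA.
  apply/matrixP=> i j; rewrite !mxE; ring.
Qed.
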